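(* Let $K,L>0$ with $K\sqrt L\ge1$, let $A(p,q)=(p^2q)^{1/3}$ and $A^\delta(p,q)=\operatorname{sgn}(q)\min(\lvert A(p,q)\rvert,K\lvert p\rvert,L\lvert q\rvert)$. Then \[ \left\lvert\frac{d}{dp}A^\delta(p,q)\right\rvert\le K,\qquad\left\lvert\frac{d}{dq}A^\delta(p,q)\right\rvert\le L \] wherever the derivatives exist, and $A^\delta$ is Lipschitz continuous. Moreover, \[ \lvert A^\delta(p,q)-A(p,q)\rvert\le\max\left(\frac{4}{27K^2}\lvert q\rvert,\frac{2}{3\sqrt{3L}}\lvert p\rvert\right)\quad\text{for all }p,q\in\mathbb R. \]
   Context: Real cube root; $\operatorname{sgn}(q)=q/\lvert q\rvert$ for $q\neq0$, $\operatorname{sgn}(0)=0$. *)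

(* Defs.v *)
From Stdlib Require Import Reals Lra.
From Coquelicot Require Import Coquelicot.
Open Scope R_scope.

Definition sgn (q : R) : R :=
  if Rlt_dec 0 q then 1 else if Rlt_dec q 0 then -1 else 0.

Definition cbrt (x : R) : R :=
  if Rlt_dec 0 x then Rpower x (1/3)
  else if Rlt_dec x 0 then - Rpower (- x) (1/3) else 0.

Definition A (p q : R) : R := cbrt (p ^ 2 * q).

Definition Adelta (K L p q : R) : R :=
  sgn q * Rmin (Rmin (Rabs (A p q)) (K * Rabs p)) (L * Rabs q).

(* Main.v *)
Require Import Defs.
From Stdlib Require Import Reals Lra Psatz Lia.
From Coquelicot Require Import Coquelicot.
Open Scope R_scope.

Lemma Rpow_pos x y : 0 < Rpower x y.
Proof. unfold Rpower; apply exp_pos. Qed.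

Lemma rp3 x : 0 < x -> Rpower x (1/3) ^ 3 = x.
Proof.
  intros hx. rewrite <- Rpower_pow by apply Rpow_pos.
  rewrite Rpower_mult. replace (1/3 * INR 3) with 1 by (simpl; field).
  now apply Rpower_1.
Qed.

Lemma cb3 x : cbrt x ^ 3 = x.
Proof.
  unfold cbrt. destruct (Rlt_dec 0 x). now apply rp3.
  destruct (Rlt_dec x 0). replace ((- Rpower (- x) (1/3))^3) with (- (Rpower (-x) (1/3) ^3)) by ring.
  rewrite rp3; lra. simpl; lra.
Qed.

Lemma cube_inj r s : r ^ 3 = s ^ 3 -> r = s.
Proof.
  intros h. assert ((r - s) * ((r + s/2)^2 + 3/4 * s^2) = 0) by (assert (E: (r - s) * ((r + s/2)^2 + 3/4 * s^2) = r^3 - s^3) by field; lra).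
  apply Rmult_integral in H. destruct H. lra.
  pose proof (pow2_ge_0 (r + s/2)). pose proof (pow2_ge_0 s).
  assert (s * s = 0) by (simpl in *; lra). apply Rmult_integral in H2. assert (s = 0) by (destruct H2; auto). subst.
  assert (r * r = 0) by (simpl in *; lra). apply Rmult_integral in H3. destruct H3; lra.
Qed.

Lemma cb_uniq x r : r ^ 3 = x -> cbrt x = r.
Proof. intros h. apply cube_inj. now rewrite cb3. Qed.

Lemma cbrt_mul x y : cbrt (x * y) = cbrt x * cbrt y.
Proof. apply cb_uniq. rewrite Rpow_mult_distr, !cb3. auto. Qed.

Lemma cbrt_abs x : cbrt (Rabs x) = Rabs (cbrt x).
Proof. apply cb_uniq. rewrite RPow_abs, cb3. auto. Qed.

Lemma cbrt_nonneg x : 0 <= x -> 0 <= cbrt x.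
Proof. intros h. unfold cbrt. destruct (Rlt_dec 0 x). left; apply Rpow_pos.
  destruct (Rlt_dec x 0); lra. Qed.

Lemma cbrt_sgn q : cbrt q = sgn q * cbrt (Rabs q).
Proof. rewrite cbrt_abs. unfold sgn. destruct (Rlt_dec 0 q).
  rewrite Rabs_right; [lra|]. apply Rle_ge, cbrt_nonneg; lra.
  destruct (Rlt_dec q 0). rewrite Rabs_left. lra.
  unfold cbrt. destruct (Rlt_dec 0 q); [lra|]. destruct (Rlt_dec q 0); [|lra].
  pose proof (Rpow_pos (-q) (1/3)); lra.
  assert (q = 0) by lra. subst. unfold cbrt. destruct (Rlt_dec 0 0); [lra|]. destruct (Rlt_dec 0 0); lra.
Qed.

Lemma A_form p q : A p q = sgn q * (cbrt (Rabs p) ^ 2 * cbrt (Rabs q)).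
Proof. unfold A. replace (p^2*q) with (p*p*q) by ring. rewrite !cbrt_mul, cbrt_abs, (cbrt_sgn q). simpl.
  rewrite Rmult_1_r, <- (Rabs_mult (cbrt p)), (Rabs_right (cbrt p * cbrt p)). ring.
  apply Rle_ge; nra. Qed.

Lemma sgn_abs q : Rabs (sgn q) <= 1.
Proof. unfold sgn. destruct (Rlt_dec 0 q); [|destruct (Rlt_dec q 0)]; unfold Rabs; destruct Rcase_abs; lra. Qed.

Lemma absA p q : Rabs (A p q) = cbrt (Rabs p) ^ 2 * cbrt (Rabs q).
Proof. unfold A. replace (p^2*q) with (p*p*q) by ring. rewrite !cbrt_mul, !Rabs_mult, !cbrt_abs. ring. Qed.

Lemma Adelta_form K L p q : Adelta K L p q =
  sgn q * Rmin (Rmin (cbrt (Rabs p) ^ 2 * cbrt (Rabs q)) (K * cbrt (Rabs p) ^3)) (L * cbrt (Rabs q) ^ 3).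
Proof. unfold Adelta. rewrite !cb3, absA. auto. Qed.
Lemma keyP b K u v : 0 <= b -> 0 < K -> 0 < u <= v -> u^2*b <= K*u^3 ->
  v^2*b <= K*v^3 /\ v^2*b - u^2*b <= K*(v^3 - u^3).
Proof.
  intros hb hK huv h1.
  assert (hx: (v^2*b - u^2*b) - K*(v^3-u^3) = (v-u)*((v+u)*b - K*(v^2+u*v+u^2))) by ring.
    assert (b <= K*u). { assert (u*(K*u - b) * u >= 0) by (simpl in h1; nra).
      assert (0 < u*u) by nra. nra. }
    assert ((v+u)*b <= K*(v^2+u*v+u^2)) by (simpl; nra). split.
    assert (v*v*b <= v*v*(K*v)) by (apply Rmult_le_compat_l; nra). simpl; nra.
    nra.
Qed.
Lemma polyP b K M u v : 0 <= b -> 0 < K -> 0 <= M -> 0 <= u <= v ->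
  0 <= Rmin (Rmin (v^2*b) (K*v^3)) M - Rmin (Rmin (u^2*b) (K*u^3)) M <= K*(v^3 - u^3).
Proof.
  intros hb hK hM huv.
  assert (u^2 <= v^2) by nra. assert (u^3 <= v^3) by nra.
  assert (u^2*b <= v^2*b) by nra. assert (K*u^3 <= K*v^3) by nra.
  assert (0 <= v^2*b) by nra.
  destruct (Req_dec u 0) as [->|hu].
  { replace (0^2*b) with 0 by ring. replace (K*0^3) with 0 by ring.
    unfold Rmin; repeat destruct Rle_dec; try lra. }
  assert (u^2*b <= K*u^3 -> v^2*b <= K*v^3 /\ v^2*b - u^2*b <= K*(v^3 - u^3)) by
    (apply keyP; lra).
  unfold Rmin; repeat destruct Rle_dec; try lra.
  all: split; try nra.
Qed.
Lemma keyQ a L u v : 0 <= a -> 0 < L -> 0 < u <= v -> a*u <= L*u^3 ->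
  a*v <= L*v^3 /\ a*v - a*u <= L*(v^3 - u^3).
Proof.
  intros ha hL huv h1.
  assert (a <= L*u^2). { assert (u*(L*u^2 - a) >= 0) by (simpl in *; nra). simpl in *; nra. }
  assert (hx: (a*v - a*u) - L*(v^3-u^3) = (v-u)*(a - L*(v^2+u*v+u^2))) by ring.
  assert (u^2 <= v^2) by (simpl; nra).
  assert (L*u^2 <= L*v^2) by (apply Rmult_le_compat_l; lra).
  split. assert (v * a <= v * (L*v^2)) by (apply Rmult_le_compat_l; lra). simpl in *; nra.
  assert (a <= L*(v^2+u*v+u^2)) by (simpl in *; nra). nra.
Qed.
Lemma polyQ a L M u v : 0 <= a -> 0 < L -> 0 <= M -> 0 <= u <= v ->
  0 <= Rmin (Rmin (a*v) M) (L*v^3) - Rmin (Rmin (a*u) M) (L*u^3) <= L*(v^3 - u^3).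
Proof.
  intros hb hK hM huv.
  assert (u^2 <= v^2) by nra. assert (u^3 <= v^3) by nra.
  assert (a*u <= a*v) by nra. assert (L*u^3 <= L*v^3) by nra.
  assert (0 <= a*v) by nra. assert (0 <= v^3) by nra.
  destruct (Req_dec u 0) as [->|hu].
  { replace (a*0) with 0 by ring. replace (L*0^3) with 0 by ring.
    unfold Rmin; repeat destruct Rle_dec; try lra. }
  assert (a*u <= L*u^3 -> a*v <= L*v^3 /\ a*v - a*u <= L*(v^3 - u^3)) by
    (apply keyQ; lra).
  unfold Rmin; repeat destruct Rle_dec; try lra.
  all: split; try nra.
Qed.
Lemma errK u b K : 0 <= u -> 0 <= b -> 0 < K -> u^2*b - K*u^3 <= 4/(27*K^2)*b^3.
Proof.
  intros hu hb hK.
  assert (h: 0 <= (2*b - 3*K*u)^2*(b+3*K*u)) by (apply Rmult_le_pos; [apply pow2_ge_0| nra]).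
  assert (e: 4/(27*K^2)*b^3 - (u^2*b - K*u^3) = (2*b - 3*K*u)^2*(b+3*K*u) / (27*K^2)) by (field; lra).
  assert (0 <= (2*b - 3*K*u)^2*(b+3*K*u) / (27*K^2)) by (apply Rmult_le_pos; [lra | left; apply Rinv_0_lt_compat; nra]).
  lra.
Qed.
Lemma errL u b L s : 0 <= u -> 0 <= b -> 0 < s -> s^2 = 3*L -> u^2*b - L*b^3 <= 2/(3*s)*u^3.
Proof.
  intros hu hb hs hL.
  replace L with (s^2/3) by lra.
  assert (h: 0 <= (u - s*b)^2*(2*u+s*b)) by (apply Rmult_le_pos; [apply pow2_ge_0| nra]).
  assert (e: 2/(3*s)*u^3 - (u^2*b - s^2/3*b^3) = (u - s*b)^2*(2*u+s*b) / (3*s)) by (field; lra).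
  assert (0 <= (u - s*b)^2*(2*u+s*b) / (3*s)) by (apply Rmult_le_pos; [lra | left; apply Rinv_0_lt_compat; nra]).
  lra.
Qed.
Lemma errB u b K L s : 0 <= u -> 0 <= b -> 0 < K -> 0 < L -> 0 < s -> s^2 = 3*L ->
  0 <= u^2*b - Rmin (Rmin (u^2*b) (K*u^3)) (L*b^3) <= Rmax (4/(27*K^2)*b^3) (2/(3*s)*u^3).
Proof.
  intros hu hb hK hL hs hsL.
  pose proof (errK u b K hu hb hK). pose proof (errL u b L s hu hb hs hsL).
  pose proof (Rmax_l (4/(27*K^2)*b^3) (2/(3*s)*u^3)).
  pose proof (Rmax_r (4/(27*K^2)*b^3) (2/(3*s)*u^3)).
  assert (0 <= 4/(27*K^2)*b^3). { apply Rmult_le_pos. left; apply Rdiv_lt_0_compat; nra. nra. }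
  unfold Rmin; repeat destruct Rle_dec; lra.
Qed.
Lemma deriv_bound f p l K : is_derive f p l -> (forall x, Rabs (f x - f p) <= K * Rabs (x - p)) -> Rabs l <= K.
Proof.
  intros hd hl. apply is_derive_Reals in hd.
  destruct (Rle_dec (Rabs l) K) as [|hn]; auto. exfalso.
  assert (he : 0 < Rabs l - K) by lra.
  destruct (hd _ he) as [d hdd].
  assert (hd0 : 0 < d / 2) by (destruct d; simpl; lra).
  assert (hdn : d/2 <> 0) by lra.
  assert (hda : Rabs (d/2) < d) by (rewrite Rabs_right by lra; destruct d; simpl in *; lra).
  specialize (hdd _ hdn hda).
  specialize (hl (p + d/2)). replace (p + d/2 - p) with (d/2) in hl by ring.
  rewrite (Rabs_right (d/2)) in hl by lra.
  assert (Rabs ((f (p + d/2) - f p) / (d/2)) <= K).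
  { unfold Rdiv. rewrite Rabs_mult, Rabs_inv, (Rabs_right (d * /2)) by lra.
    apply (Rmult_le_reg_r (d * /2)); [lra|]. rewrite Rmult_assoc, Rinv_l by lra. lra. }
  pose proof (Rabs_triang_inv l ((f (p + d / 2) - f p) / (d / 2))).
  rewrite <- Rabs_Ropp in hdd. replace (- ((f (p + d / 2) - f p) / (d / 2) - l)) with (l - (f (p + d / 2) - f p) / (d / 2)) in hdd by ring.
  lra.
Qed.

Lemma even_lip (g : R -> R) K : (forall s t, 0 <= s <= t -> 0 <= g t - g s <= K * (t - s)) ->
  forall x y, Rabs (g (Rabs x) - g (Rabs y)) <= K * Rabs (x - y).
Proof.
  intros hg x y. pose proof (Rabs_triang_inv2 x y) as ht.
  pose proof (Rabs_pos x). pose proof (Rabs_pos y).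
  assert (0 <= K). { pose proof (hg 0 1 ltac:(lra)). lra. }
  assert (K * Rabs (Rabs x - Rabs y) <= K * Rabs (x - y)) by (apply Rmult_le_compat_l; lra).
  destruct (Rle_dec (Rabs x) (Rabs y)).
  - pose proof (hg (Rabs x) (Rabs y) ltac:(lra)).
    rewrite (Rabs_left1 (Rabs x - Rabs y)) in H2 by lra.
    rewrite Rabs_left1 by lra. lra.
  - pose proof (hg (Rabs y) (Rabs x) ltac:(lra)).
    rewrite (Rabs_right (Rabs x - Rabs y)) in H2 by lra.
    rewrite Rabs_right by lra. lra.
Qed.
Ltac fin x y := try lra; try (assert (x = y) by lra; subst; lra); try (assert (x = 0) by lra; subst; lra);
  try (assert (y = 0) by lra; subst; lra); try (assert (x=0) by lra; assert (y=0) by lra; subst; lra).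
Lemma odd_lip (H : R -> R) L : (forall s t, 0 <= s <= t -> 0 <= H t - H s <= L * (t - s)) ->
  (forall s, 0 <= s -> 0 <= H s <= L * s) ->
  forall x y, Rabs (sgn x * H (Rabs x) - sgn y * H (Rabs y)) <= L * Rabs (x - y).
Proof.
  intros hm hb x y.
  pose proof (hb (Rabs x) (Rabs_pos x)). pose proof (hb (Rabs y) (Rabs_pos y)).
  destruct (Rle_dec (Rabs x) (Rabs y)).
  - pose proof (hm (Rabs x) (Rabs y) ltac:(split; [apply Rabs_pos|auto])).
    unfold sgn; destruct (Rlt_dec 0 x); destruct (Rlt_dec x 0); destruct (Rlt_dec 0 y); destruct (Rlt_dec y 0);
    try lra; revert H0 H1 H2 r; unfold Rabs; repeat destruct Rcase_abs; intros; fin x y.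
  - pose proof (hm (Rabs y) (Rabs x) ltac:(split; [apply Rabs_pos|lra])).
    unfold sgn; destruct (Rlt_dec 0 x); destruct (Rlt_dec x 0); destruct (Rlt_dec 0 y); destruct (Rlt_dec y 0);
    try lra; revert H0 H1 H2 n; unfold Rabs; repeat destruct Rcase_abs; intros; fin x y.
Qed.

Lemma cbrt_mono s t : 0 <= s <= t -> cbrt s <= cbrt t.
Proof.
  intros h. pose proof (cbrt_nonneg s ltac:(lra)). pose proof (cbrt_nonneg t ltac:(lra)).
  pose proof (cb3 s). pose proof (cb3 t).
  destruct (Rle_dec (cbrt s) (cbrt t)); auto.
  assert (cbrt t ^ 3 < cbrt s ^ 3). { simpl. assert (cbrt t * cbrt t <= cbrt s * cbrt s) by nra.
    assert (cbrt t * (cbrt t * cbrt t) <= cbrt t * (cbrt s * cbrt s)) by (apply Rmult_le_compat_l; lra).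
    assert (0 < cbrt s * cbrt s) by (apply Rmult_lt_0_compat; lra).
    assert (cbrt t * (cbrt s * cbrt s) < cbrt s * (cbrt s * cbrt s)) by (apply Rmult_lt_compat_r; lra). lra. }
  lra.
Qed.

Lemma lipP K L (hK : 0 < K) (hL : 0 < L) p1 p2 q :
  Rabs (Adelta K L p1 q - Adelta K L p2 q) <= K * Rabs (p1 - p2).
Proof.
  set (b := cbrt (Rabs q)).
  set (G := fun s => Rmin (Rmin (cbrt s ^ 2 * b) (K * cbrt s ^ 3)) (L * b ^ 3)).
  assert (E : forall p, Adelta K L p q = sgn q * G (Rabs p)) by (intros; rewrite Adelta_form; reflexivity).
  rewrite !E, <- Rmult_minus_distr_l, Rabs_mult.
  assert (hb : 0 <= b) by (apply cbrt_nonneg, Rabs_pos).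
  assert (hG : forall s t, 0 <= s <= t -> 0 <= G t - G s <= K * (t - s)).
  { intros s t hst. unfold G. replace (t - s) with (cbrt t ^ 3 - cbrt s ^ 3) by (rewrite !cb3; ring).
    apply polyP; auto. pose proof (pow_le b 3 hb). nra.
    split. apply cbrt_nonneg; lra. apply cbrt_mono; auto. }
  pose proof (even_lip G K hG p1 p2).
  pose proof (sgn_abs q). pose proof (Rabs_pos (sgn q)). pose proof (Rabs_pos (G (Rabs p1) - G (Rabs p2))).
  assert (Rabs (sgn q) * Rabs (G (Rabs p1) - G (Rabs p2)) <= 1 * Rabs (G (Rabs p1) - G (Rabs p2))) by
    (apply Rmult_le_compat_r; lra).
  lra.
Qed.

Lemma lipQ K L (hK : 0 < K) (hL : 0 < L) p q1 q2 :
  Rabs (Adelta K L p q1 - Adelta K L p q2) <= L * Rabs (q1 - q2).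
Proof.
  set (a := cbrt (Rabs p) ^ 2). set (M := K * cbrt (Rabs p) ^ 3).
  set (H := fun s => Rmin (Rmin (a * cbrt s) M) (L * cbrt s ^ 3)).
  assert (E : forall q, Adelta K L p q = sgn q * H (Rabs q)) by (intros; rewrite Adelta_form; reflexivity).
  rewrite !E.
  assert (ha : 0 <= a) by (apply pow_le, cbrt_nonneg, Rabs_pos).
  assert (hM : 0 <= M) by (pose proof (pow_le _ 3 (cbrt_nonneg _ (Rabs_pos p))); unfold M; nra).
  apply odd_lip.
  - intros s t hst. unfold H. replace (t - s) with (cbrt t ^ 3 - cbrt s ^ 3) by (rewrite !cb3; ring).
    apply polyQ; auto.
    split. apply cbrt_nonneg; lra. apply cbrt_mono; auto.
  - intros s hs. unfold H. pose proof (cbrt_nonneg s hs). pose proof (pow_le _ 3 H0).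
    rewrite cb3 in H1. rewrite cb3. assert (0 <= a * cbrt s) by nra.
    unfold Rmin; repeat destruct Rle_dec; nra.
Qed.

Theorem mainTheorem9 (K L : R) (hK : 0 < K) (hL : 0 < L) (hKL : 1 <= K * sqrt L) :
  (forall p q l, is_derive (fun x => Adelta K L x q) p l -> Rabs l <= K) /\
  (forall p q l, is_derive (fun y => Adelta K L p y) q l -> Rabs l <= L) /\
  (exists C : R, forall p1 q1 p2 q2 : R,
      Rabs (Adelta K L p1 q1 - Adelta K L p2 q2) <= C * (Rabs (p1 - p2) + Rabs (q1 - q2))) /\
  (forall p q : R,
      Rabs (Adelta K L p q - A p q)
        <= Rmax (4 / (27 * K ^ 2) * Rabs q) (2 / (3 * sqrt (3 * L)) * Rabs p)).
Proof.
  split; [|split; [|split]].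
  - intros p q l hd. apply (deriv_bound _ _ _ _ hd). intros x. apply lipP; auto.
  - intros p q l hd. apply (deriv_bound _ _ _ _ hd). intros x. apply lipQ; auto.
  - exists (K + L). intros p1 q1 p2 q2.
    pose proof (lipP K L hK hL p1 p2 q1). pose proof (lipQ K L hK hL p2 q1 q2).
    pose proof (Rabs_triang (Adelta K L p1 q1 - Adelta K L p2 q1) (Adelta K L p2 q1 - Adelta K L p2 q2)).
    replace (Adelta K L p1 q1 - Adelta K L p2 q1 + (Adelta K L p2 q1 - Adelta K L p2 q2))
      with (Adelta K L p1 q1 - Adelta K L p2 q2) in H1 by ring.
    pose proof (Rabs_pos (p1 - p2)). pose proof (Rabs_pos (q1 - q2)). nra.
  - intros p q. rewrite Adelta_form, A_form.
    set (u := cbrt (Rabs p)). set (b := cbrt (Rabs q)).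
    assert (hp : Rabs p = u ^ 3) by (unfold u; rewrite cb3; auto).
    assert (hq : Rabs q = b ^ 3) by (unfold b; rewrite cb3; auto).
    rewrite hp, hq.
    rewrite <- Rmult_minus_distr_l, Rabs_mult.
    assert (hu : 0 <= u) by (apply cbrt_nonneg, Rabs_pos).
    assert (hb : 0 <= b) by (apply cbrt_nonneg, Rabs_pos).
    assert (hs : 0 < sqrt (3 * L)) by (apply sqrt_lt_R0; lra).
    assert (hs2 : sqrt (3 * L) ^ 2 = 3 * L) by (simpl; rewrite Rmult_1_r; apply sqrt_sqrt; lra).
    pose proof (errB u b K L (sqrt (3 * L)) hu hb hK hL hs hs2).
    rewrite Rabs_minus_sym, (Rabs_right (_ - _)) by lra.
    pose proof (sgn_abs q). pose proof (Rabs_pos (sgn q)).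
    set (X := u ^ 2 * b - Rmin (Rmin (u ^ 2 * b) (K * u ^ 3)) (L * b ^ 3)) in *.
    assert (Rabs (sgn q) * X <= 1 * X) by (apply Rmult_le_compat_r; lra).
    lra.
Qed.
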